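(* Let $B_n$ be the group of signed permutations of $\{\pm1,\ldots,\pm n\}$. For $\pi\in B_n$ set $\pi(0)=0$, $\mathrm{des}(\pi)=\#\{0\le i<n : \pi(i)>\pi(i+1)\}$ and $\mathrm{ides}(\pi)=\mathrm{des}(\pi^{-1})$. For $\pi$ uniformly random in $B_n$ let $X_{\mathrm{des}}=\mathrm{des}(\pi)$ and $X_{\mathrm{des}+\mathrm{ides}}=\mathrm{des}(\pi)+\mathrm{ides}(\pi)$. Then \[ \mathbb{E}(X_{\mathrm{des}+\mathrm{ides}})=n,\qquad \mathbb{V}(X_{\mathrm{des}+\mathrm{ides}}) = 2\,\mathbb{V}(X_{\mathrm{des}}) + \frac12. \]
   Context: A signed permutation is a bijection $\pi$ of $\{\pm1,\ldots,\pm n\}$ with $\pi(-i)=-\pi(i)$, written $[\pi(1),\ldots,\pi(n)]$; the convention $\pi(0)=0$ is applied to both $\pi$ and $\pi^{-1}$. *)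

(* Defs.v *)
From HB Require Import structures.
From mathcomp Require Import all_boot all_order all_algebra all_fingroup.
Set Implicit Arguments. Unset Strict Implicit. Unset Printing Implicit Defensive.
Import Order.TTheory GRing.Theory Num.Theory.
Local Open Scope ring_scope.

(* The ground set {+-1,...,+-n} is encoded as 'I_n * bool:
   (i, false) stands for i+1 and (i, true) stands for -(i+1). *)
Definition sval_of (n : nat) (x : 'I_n * bool) : int :=
  if x.2 then - (x.1.+1%:Z) else x.1.+1%:Z.

Definition sneg (n : nat) (x : 'I_n * bool) : 'I_n * bool := (x.1, ~~ x.2).

Definition Bn (n : nat) : {set {perm ('I_n * bool)}} :=
  [set p : {perm ('I_n * bool)} | [forall x, p (sneg x) == sneg (p x)]].

(* pi(k) as an integer for k in {0,...,n}, with the convention pi(0) = 0 *)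
Definition pival (n : nat) (p : {perm ('I_n * bool)}) (k : nat) : int :=
  match k with
  | 0 => 0
  | k'.+1 => match insub k' : option 'I_n with
             | Some j => sval_of (p (j, false))
             | None => 0
             end
  end.

Definition des (n : nat) (p : {perm ('I_n * bool)}) : nat :=
  #|[set i : 'I_n | pival p (i.+1) < pival p i]|.

Definition ides (n : nat) (p : {perm ('I_n * bool)}) : nat := des (p^-1)%g.

Definition expB (n : nat) (X : {perm ('I_n * bool)} -> nat) : rat :=
  (\sum_(p in Bn n) (X p)%:R) / #|Bn n|%:R.

Definition varB (n : nat) (X : {perm ('I_n * bool)} -> nat) : rat :=
  (\sum_(p in Bn n) ((X p)%:R - expB X) ^+ 2) / #|Bn n|%:R.

(* Main.v *)
Require Import Defs.
From mathcomp Require Import all_boot all_order all_algebra all_fingroup.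
From mathcomp Require Import zify ring.
Set Implicit Arguments. Unset Strict Implicit. Unset Printing Implicit Defensive.
Import Order.TTheory GRing.Theory Num.Theory.


Local Close Scope group_scope.
Local Close Scope ring_scope.

Lemma snegK n : involutive (@sneg n).
Proof. by case=> c s; rewrite /sneg /= negbK. Qed.

Lemma inBn n (p : {perm ('I_n * bool)}) :
  reflect (forall x, p (sneg x) = sneg (p x)) (p \in Bn n).
Proof. rewrite inE; apply: (iffP forallP) => H x; [exact/eqP/H | exact/eqP/H]. Qed.

Local Open Scope group_scope.

Lemma Bn1 n : 1 \in Bn n.
Proof. by apply/inBn=> x; rewrite !perm1. Qed.

Lemma BnM n (p q : {perm ('I_n * bool)}) : p \in Bn n -> q \in Bn n -> p * q \in Bn n.
Proof. by move=> /inBn hp /inBn hq; apply/inBn => x; rewrite !permM hp hq. Qed.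

Lemma BnV n (p : {perm ('I_n * bool)}) : p \in Bn n -> p^-1 \in Bn n.
Proof.
move=> /inBn hp; apply/inBn => x; apply: (@perm_inj _ p).
by rewrite permKV hp permKV.
Qed.

Lemma BnMl n (g p : {perm ('I_n * bool)}) : g \in Bn n -> (g * p \in Bn n) = (p \in Bn n).
Proof.
move=> hg; apply/idP/idP => h; last exact: BnM.
by rewrite -(mulKg g p); apply: BnM => //; apply: BnV.
Qed.

Lemma BnMr n (g p : {perm ('I_n * bool)}) : g \in Bn n -> (p * g \in Bn n) = (p \in Bn n).
Proof.
move=> hg; apply/idP/idP => h; last exact: BnM.
by rewrite -(mulgK g p); apply: BnM => //; apply: BnV.
Qed.

Lemma BnVE n (p : {perm ('I_n * bool)}) : (p^-1 \in Bn n) = (p \in Bn n).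
Proof. by apply/idP/idP => h; [rewrite -(invgK p)|]; apply: BnV. Qed.

Lemma Bn_true n (p : {perm ('I_n * bool)}) c : p \in Bn n -> p (c, true) = sneg (p (c, false)).
Proof. by move=> /inBn h; rewrite -h. Qed.

Lemma sum_Bn_Ml n (R : Type) (idx : R) (op : Monoid.com_law idx) (g : {perm ('I_n * bool)}) F :
  g \in Bn n -> \big[op/idx]_(p in Bn n) F (g * p) = \big[op/idx]_(p in Bn n) F p.
Proof.
move=> hg; rewrite [RHS](reindex_inj (mulgI g)) /=.
by apply: eq_bigl => p; rewrite BnMl.
Qed.

Lemma sum_Bn_Mr n (R : Type) (idx : R) (op : Monoid.com_law idx) (g : {perm ('I_n * bool)}) F :
  g \in Bn n -> \big[op/idx]_(p in Bn n) F (p * g) = \big[op/idx]_(p in Bn n) F p.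
Proof.
move=> hg; rewrite [RHS](reindex_inj (mulIg g)) /=.
by apply: eq_bigl => p; rewrite BnMr.
Qed.

Lemma sum_Bn_V n (R : Type) (idx : R) (op : Monoid.com_law idx) F :
  \big[op/idx]_(p in Bn n) F (p^-1) = \big[op/idx]_(p in Bn n) F p.
Proof.
rewrite [RHS](reindex_inj (@invg_inj _)) /=.
by apply: eq_bigl => p; rewrite BnVE.
Qed.


Local Close Scope group_scope.
Local Close Scope ring_scope.

Definition prev n (i : 'I_n) : 'I_n := Ordinal (leq_ltn_trans (leq_pred i) (ltn_ord i)).

Lemma prevE n (i : 'I_n) : val (prev i) = (val i).-1. Proof. by []. Qed.

Local Open Scope group_scope.

Definition flip n (a : 'I_n) : {perm ('I_n * bool)} := tperm (a, false) (a, true).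
Definition swp n (a b : 'I_n) : {perm ('I_n * bool)} :=
  tperm (a, false) (b, false) * tperm (a, true) (b, true).
Definition sg n (i : 'I_n) : {perm ('I_n * bool)} :=
  if val i == 0%N then flip i else swp (prev i) i.

Lemma flipE n (a : 'I_n) x : flip a x = if x.1 == a then sneg x else x.
Proof.
case: x => c s; rewrite /flip /sneg /=.
case: (eqVneq c a) => [->|ne].
  by case: s; rewrite ?tpermL ?tpermR.
rewrite tpermD // xpair_eqE /= eq_sym (negbTE ne) //.
Qed.

Lemma tpermE' (T : finType) (u v w : T) : tperm u v w = if w == u then v else if w == v then u else w.
Proof.
case: tpermP => [->|->|h1 h2]; rewrite ?eqxx //.
  by case: eqP => [->|].
by move/eqP/negbTE: h1 => ->; move/eqP/negbTE: h2 => ->.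
Qed.

Lemma tperm_pair n (a b c : 'I_n) (s : bool) : tperm (a, s) (b, s) (c, s) = (tperm a b c, s).
Proof.
case: (tpermP a b c) => [->|->|na nb]; rewrite ?tpermL ?tpermR //.
by rewrite tpermD // xpair_eqE negb_and; apply/orP; left; apply/eqP => E; [apply: na|apply: nb].
Qed.

Lemma tperm_pairD n (a b c : 'I_n) (s t : bool) : s != t -> tperm (a, s) (b, s) (c, t) = (c, t).
Proof. by move=> st; rewrite tpermD // xpair_eqE negb_and st orbT. Qed.

Lemma swpE n (a b : 'I_n) x : swp a b x = (tperm a b x.1, x.2).
Proof.
case: x => c s; rewrite /swp permM /=.
case: s. rewrite (@tperm_pairD n a b c false true) //. exact: tperm_pair. rewrite (@tperm_pair n a b c false). exact: tperm_pairD.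
Qed.

Lemma sgE n (i : 'I_n) x : sg i x =
  if val i == 0%N then (if x.1 == i then sneg x else x) else (tperm (prev i) i x.1, x.2).
Proof. by rewrite /sg; case: ifP => _; rewrite ?flipE ?swpE. Qed.

Lemma sg_Bn n (i : 'I_n) : sg i \in Bn n.
Proof.
apply/inBn => -[c s]; rewrite !sgE /sneg /=.
by case: ifP => _ //; case: ifP.
Qed.

Lemma sgK n (i : 'I_n) : sg i * sg i = 1.
Proof.
apply/permP => -[c s]; rewrite permM perm1 !sgE /=.
case: (val i == 0%N) => /=; last by rewrite tpermK.
case: (eqVneq c i) => h /=; last by rewrite (negbTE h).
by rewrite h eqxx /sneg /= negbK.
Qed.

Lemma sgV n (i : 'I_n) : (sg i)^-1 = sg i.
Proof. by apply: (mulgI (sg i)); rewrite mulgV sgK. Qed.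


Local Close Scope group_scope.
Local Close Scope ring_scope.

Definition D n (i : 'I_n) (p : {perm ('I_n * bool)}) : bool :=
  (pival p (val i).+1 < pival p (val i))%R.

Lemma desE n (p : {perm ('I_n * bool)}) : des p = \sum_(i < n) D i p.
Proof. rewrite /des -sum1_card big_mkcond /=; apply: eq_bigr => i _; rewrite inE /D; by case: (_ < _)%R. Qed.

Lemma pivalS n (p : {perm ('I_n * bool)}) (i : 'I_n) : pival p (val i).+1 = sval_of (p (i, false)).
Proof. rewrite /=; case: insubP => [j _ /val_inj -> //|]; by rewrite ltn_ord. Qed.

Lemma pivalP n (p : {perm ('I_n * bool)}) (i : 'I_n) :
  pival p (val i) = if val i == 0%N then 0%R else sval_of (p (prev i, false)).
Proof.
case: i => [[|k] hk] //=.
case: insubP => [j _ hj|]; last by rewrite (ltn_trans _ hk).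
by do 3 f_equal; apply: val_inj.
Qed.

Lemma DE n (i : 'I_n) p : D i p =
  if val i == 0%N then (sval_of (p (i, false)) < 0)%R
  else (sval_of (p (i, false)) < sval_of (p (prev i, false)))%R.
Proof. by rewrite /D pivalS pivalP; case: ifP. Qed.

Lemma sval_neg n (x : 'I_n * bool) : (sval_of x < 0)%R = x.2.
Proof. case: x => c [] ; rewrite /sval_of /=; [lia | apply/negP; lia]. Qed.

Lemma sval_sneg n (x : 'I_n * bool) : sval_of (sneg x) = (- sval_of x)%R.
Proof. by case: x => c []; rewrite /sval_of /= ?opprK. Qed.

Lemma sval_inj n : injective (@sval_of n).
Proof.
move=> [c s] [d t]; rewrite /sval_of /=; case: s; case: t => /= h.
all: try lia; congr (_, _); apply: val_inj => /=; lia.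
Qed.

Lemma sval_neq0 n (x : 'I_n * bool) : sval_of x != 0%R.
Proof. by case: x => c []; rewrite /sval_of /=; lia. Qed.

Lemma lt_flip (a b : int) : a != b -> (a < b)%R = ~~ (b < a)%R.
Proof. by rewrite ltNge le_eqVlt eq_sym => /negbTE ->. Qed.

Lemma fst_eq n (x y : 'I_n * bool) : (x.1 == y.1) = (y == x) || (y == sneg x).
Proof.
move: x y => [c s] [d t]; rewrite /sneg /= !xpair_eqE.
by rewrite (eq_sym c d); case: (d == c); case: s; case: t. Qed.

Lemma Bn_fst n (q : {perm ('I_n * bool)}) u w : q \in Bn n ->
  ((q u).1 == (q w).1) = (u.1 == w.1).
Proof.
move=> /inBn hq; rewrite !fst_eq -hq !(inj_eq perm_inj); done.
Qed.


Local Close Scope group_scope.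
Local Close Scope ring_scope.

Lemma sg_order0 n (j : 'I_n) y :
  ~~ ((val j == 0%N) && (y.1 == j)) -> (sval_of (sg j y) < 0)%R = (sval_of y < 0)%R.
Proof.
rewrite !sval_neg sgE; case: ifP => h0 //=.
by case: ifP => h1 //=; rewrite h1.
Qed.

Lemma sg_order n (j : 'I_n) (x y : 'I_n * bool) : x.1 != y.1 ->
  ~~ [&& val j != 0%N, x.2 == y.2 & ((x.1 == prev j) && (y.1 == j) || (x.1 == j) && (y.1 == prev j))] ->
  (sval_of (sg j y) < sval_of (sg j x))%R = (sval_of y < sval_of x)%R.
Proof.
move: x y => [c s] [d t] /=; rewrite !sgE /= !tpermE' /sneg /=.
rewrite -!val_eqE /=.
case E0: (nat_of_ord j == 0%N).
  case E1: (nat_of_ord c == nat_of_ord j); case E2: (nat_of_ord d == nat_of_ord j); case: s; case: t;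
  rewrite /sval_of /= => /eqP H1 H2; have H3 : nat_of_ord c <> nat_of_ord d := H1; apply/idP/idP; lia.
case E1: (nat_of_ord c == nat_of_ord j); case E2: (nat_of_ord d == nat_of_ord j);
case E3: (nat_of_ord c == (nat_of_ord j).-1); case E4: (nat_of_ord d == (nat_of_ord j).-1); case: s; case: t;
  rewrite /sval_of /= ?prevE => /eqP H1 H2; have H3 : nat_of_ord c <> nat_of_ord d := H1; apply/idP/idP; lia.
Qed.

Definition goodpair n (i j : 'I_n) (x y : 'I_n * bool) : bool :=
  if val i == 0%N then (val j == 0%N) && (y.1 == j)
  else [&& val j != 0%N, x.2 == y.2 & ((x.1 == prev j) && (y.1 == j) || (x.1 == j) && (y.1 == prev j))].

Definition valcond n (i j : 'I_n) (q : {perm ('I_n * bool)}) :=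
  goodpair i j (q (prev i, false)) (q (i, false)).

Lemma prev_neq n (i : 'I_n) : val i != 0%N -> (prev i == i) = false.
Proof. by case: i => [[|k] hk] h //; rewrite -val_eqE /= (ltn_eqF (ltnSn k)). Qed.
Lemma Bn_pt n (q : {perm ('I_n * bool)}) c s : q \in Bn n ->
  q (c, s) = ((q (c, false)).1, (q (c, false)).2 (+) s).
Proof.
move=> hq; case: s; last by rewrite addbF; case: (q (c, false)).
by rewrite Bn_true // addbT /sneg.
Qed.

Local Open Scope group_scope.

Lemma Binv n (q : {perm ('I_n * bool)}) c : q \in Bn n ->
  q^-1 ((q (c, false)).1, false) = (c, (q (c, false)).2).
Proof.
move=> hq; apply: (@perm_inj _ q); rewrite permKV Bn_pt // addbb.
by case: (q (c, false)).
Qed.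

Lemma tpermL' n (a b : 'I_n) : tperm a b a = b. Proof. exact: tpermL. Qed.
Lemma tpermR' n (a b : 'I_n) : tperm a b b = a. Proof. exact: tpermR. Qed.

Lemma D_sgl n (i : 'I_n) q : q \in Bn n -> D i (sg i * q) = ~~ D i q.
Proof.
move=> hq; rewrite !DE !permM !sgE /=.
case h0: (val i == 0%N); rewrite ?eqxx /=.
  rewrite Bn_true // sval_sneg oppr_lt0.
  by rewrite (@lt_flip (sval_of (q (i,false))) 0) ?negbK // sval_neq0.
rewrite tpermR' tpermL' (@lt_flip (sval_of (q (prev i, false)))) //.
apply/negP => /eqP /sval_inj /perm_inj [] /eqP.
by rewrite prev_neq // h0.
Qed.

Lemma D_change n (i j : 'I_n) q : q \in Bn n -> ~~ valcond i j q -> D i (q * sg j) = D i q.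
Proof.
move=> hq; rewrite /valcond /goodpair !DE !permM.
case h0: (val i == 0%N) => hv; first exact: sg_order0.
apply: sg_order => //.
by rewrite Bn_fst //= prev_neq // h0.
Qed.

Lemma Bn_eq n (p1 p2 : {perm ('I_n * bool)}) : p1 \in Bn n -> p2 \in Bn n ->
  (forall c, p1 (c, false) = p2 (c, false)) -> p1 = p2.
Proof.
move=> h1 h2 H; apply/permP => -[c s].
by rewrite (Bn_pt c s h1) (Bn_pt c s h2) H.
Qed.

Lemma tpermE'' n (u v w : 'I_n) : tperm u v w = if w == u then v else if w == v then u else w.
Proof. exact: tpermE'. Qed.

Lemma valcond_comm n (i j : 'I_n) q : q \in Bn n -> valcond i j q -> q * sg j = sg i * q.
Proof.
move=> hq; rewrite /valcond /goodpair.
have hB1 := BnM hq (sg_Bn j); have hB2 := BnM (sg_Bn i) hq.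
case h0: (val i == 0%N).
  move=> /andP [j0 /eqP yj]; apply: Bn_eq => // c; rewrite !permM !sgE h0 j0 /=.
  have key : ((q (c, false)).1 == j) = (c == i) by rewrite -yj Bn_fst.
  rewrite key; case: ifP => _ //.
  by rewrite Bn_true.
move=> /and3P [j0 /eqP x2 hor]; apply: Bn_eq => // c; rewrite !permM !sgE h0 (negbTE j0) /=.
have hx := Bn_fst (c, false) (prev i, false) hq.
have hy := Bn_fst (c, false) (i, false) hq.
rewrite /= in hx hy.
have pi := prev_neq (negbT h0).
rewrite !tpermE''.
case: (eqVneq c (prev i)) => [Ec|Nc].
  rewrite Ec.
  case/orP: hor => /andP [/eqP a1 /eqP a2].
  - by rewrite a1 eqxx x2 -a2; case: (q (i, false)).
  - by rewrite a1 (eq_sym j) (prev_neq j0) eqxx x2 -a2; case: (q (i, false)).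
rewrite (negbTE Nc) in hx *.
case: (eqVneq c i) => [Ec|Ni].
  rewrite Ec.
  case/orP: hor => /andP [/eqP a1 /eqP a2].
  - by rewrite a2 (eq_sym j) (prev_neq j0) eqxx -x2 -a1; case: (q (prev i, false)).
  - by rewrite a2 eqxx -x2 -a1; case: (q (prev i, false)).
rewrite (negbTE Ni) in hy *.
case/orP: hor => /andP [/eqP a1 /eqP a2].
  by rewrite -a1 hx -a2 hy; case: (q (c, false)).
by rewrite -a2 hy -a1 hx; case: (q (c, false)).
Qed.

Lemma valcond_D n (i j : 'I_n) q : q \in Bn n -> valcond i j q -> D i q = D j q^-1.
Proof.
move=> hq; rewrite /valcond /goodpair !DE.
case h0: (val i == 0%N).
  move=> /andP [j0 /eqP yj]; rewrite j0 -yj Binv // !sval_neg //.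
move=> /and3P [j0 /eqP x2 hor]; rewrite (negbTE j0).
have hi : (0 < nat_of_ord i)%N by rewrite lt0n; exact: negbT h0.
have hj : (0 < nat_of_ord j)%N by rewrite lt0n.
case/orP: hor => /andP [/eqP a1 /eqP a2].
  have e1 : q^-1 (j, false) = (i, (q (i, false)).2) by rewrite -a2 Binv.
  have e2 : q^-1 (prev j, false) = (prev i, (q (prev i, false)).2) by rewrite -a1 Binv.
  rewrite e1 e2; move: a1 a2 x2; case: (q (prev i, false)) => x1 xb; case: (q (i, false)) => y1 yb /= -> -> ->.
  by case: yb; rewrite /sval_of /=; apply/idP/idP; lia.
have e1 : q^-1 (j, false) = (prev i, (q (prev i, false)).2) by rewrite -a1 Binv.
have e2 : q^-1 (prev j, false) = (i, (q (i, false)).2) by rewrite -a2 Binv.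
rewrite e1 e2; move: a1 a2 x2; case: (q (prev i, false)) => x1 xb; case: (q (i, false)) => y1 yb /= -> -> ->.
by case: yb; rewrite /sval_of /=; apply/idP/idP; lia.
Qed.


Local Close Scope group_scope.
Local Close Scope ring_scope.

Local Open Scope group_scope.

Lemma valcondP n (i j : 'I_n) p : p \in Bn n -> reflect (p * sg j = sg i * p) (valcond i j p).
Proof.
move=> hp; apply: (iffP idP); first exact: valcond_comm.
move=> E; apply/negPn/negP => nv.
have := D_change hp nv; rewrite E D_sgl //.
by case: (D i p).
Qed.

Lemma sum_D n (i : 'I_n) : ((\sum_(p in Bn n) D i p) * 2 = #|Bn n|)%N.
Proof.
rewrite muln2 -addnn -{2}(sum_Bn_Ml addn (fun p => nat_of_bool (D i p)) (sg_Bn i)) -big_split /=.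
rewrite -sum1_card; apply: eq_bigr => p hp.
by rewrite D_sgl //; case: (D i p).
Qed.

Definition f2 n (i j : 'I_n) (p : {perm ('I_n * bool)}) : nat := D i p && D j p^-1.

Lemma f2_pt n (i j : 'I_n) p : p \in Bn n ->
  (f2 i j p + f2 i j (sg i * p) + f2 i j (p * sg j) + f2 i j (sg i * p * sg j) = 1 + valcond i j p)%N.
Proof.
move=> hp; rewrite /f2.
have hpV := BnV hp.
have hR := BnM (sg_Bn i) hp.
have dR : D i (sg i * p) = ~~ D i p by rewrite D_sgl.
have eL : D j (p * sg j)^-1 = ~~ D j p^-1 by rewrite invMg sgV D_sgl.
case: (boolP (valcond i j p)) => hv.
  have E := valcond_comm hp hv.
  have E2 : sg i * p * sg j = p by rewrite -E -mulgA sgK mulg1.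
  rewrite E2 E dR.
  have eR : D j (sg i * p)^-1 = ~~ D j p^-1 by rewrite -E eL.
  rewrite eR (valcond_D hp hv).
  by case: (D j p^-1).
have dL : D i (p * sg j) = D i p by rewrite D_change.
have eR : D j (sg i * p)^-1 = D j p^-1.
  rewrite invMg sgV D_change //.
  apply/negP => /(valcondP _ _ hpV) E.
  move/negP: hv; apply; apply/(valcondP _ _ hp).
  by apply: invg_inj; rewrite !invMg !sgV E.
have dLR : D i (sg i * p * sg j) = ~~ D i p.
  rewrite D_change // ?dR //.
  apply/negP => /(valcondP _ _ hR) E.
  move/negP: hv; apply; apply/(valcondP _ _ hp).
  apply: (mulgI (sg i)); by rewrite mulgA E mulgA sgK mul1g.
have eLR : D j (sg i * p * sg j)^-1 = ~~ D j p^-1.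
  by rewrite invMg sgV D_sgl ?eR // BnV.
rewrite dR eL dL eR dLR eLR.
by case: (D i p); case: (D j p^-1).
Qed.

Lemma sum_f2 n (i j : 'I_n) :
  (4 * \sum_(p in Bn n) f2 i j p = #|Bn n| + \sum_(p in Bn n) valcond i j p)%N.
Proof.
have e1 : (\sum_(p in Bn n) f2 i j (sg i * p) = \sum_(p in Bn n) f2 i j p)%N := sum_Bn_Ml addn (f2 i j) (sg_Bn i).
have e2 : (\sum_(p in Bn n) f2 i j (p * sg j) = \sum_(p in Bn n) f2 i j p)%N := sum_Bn_Mr addn (f2 i j) (sg_Bn j).
have e3 : (\sum_(p in Bn n) f2 i j (sg i * p * sg j) = \sum_(p in Bn n) f2 i j p)%N.
  rewrite -e1 -(sum_Bn_Mr addn (fun p => f2 i j (sg i * p)) (sg_Bn j)); apply: eq_bigr => p _; by rewrite mulgA.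
have : (\sum_(p in Bn n) (f2 i j p + f2 i j (sg i * p) + f2 i j (p * sg j) + f2 i j (sg i * p * sg j))
        = \sum_(p in Bn n) (1 + valcond i j p))%N.
  by apply: eq_bigr => p hp; rewrite f2_pt.
move=> H; rewrite !big_split /= e1 e2 e3 sum1_card in H.
set S := (\sum_(p in Bn n) f2 i j p)%N in H *; set V := (\sum_(p in Bn n) valcond i j p)%N in H *. by rewrite -H !mulSn mul0n addn0 !addnA.
Qed.


Local Close Scope group_scope.
Local Close Scope ring_scope.

Local Open Scope group_scope.

Lemma flip_Bn n (a : 'I_n) : flip a \in Bn n.
Proof. by apply/inBn => -[c s]; rewrite !flipE /sneg /=; case: ifP. Qed.

Lemma swp_Bn n (a b : 'I_n) : swp a b \in Bn n.
Proof. by apply/inBn => -[c s]; rewrite !swpE. Qed.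

Lemma trans1 n (x x' : 'I_n * bool) : exists2 g, g \in Bn n &
  g x = x' /\ forall w, w.1 != x.1 -> w.1 != x'.1 -> g w = w.
Proof.
exists (swp x.1 x'.1 * (if x.2 == x'.2 then 1 else flip x'.1)).
  by apply: BnM; [apply: swp_Bn | case: ifP => _; [apply: Bn1 | apply: flip_Bn]].
split.
  rewrite permM swpE tpermL' /=.
  case: ifP => [/eqP ->|h]; first by rewrite perm1; case: x'.
  by rewrite flipE /= eqxx /sneg /=; case: x' h => c' [] /=; case: (x.2).
move=> w h1 h2; rewrite permM swpE /= tpermD; last 2 first.
- by rewrite eq_sym.
- by rewrite eq_sym.
case: ifP => _; first by rewrite perm1; case: w h1 h2.
by rewrite flipE /= (negbTE h2); case: w h1 h2.
Qed.

Lemma trans2 n (x y x' y' : 'I_n * bool) : x.1 != y.1 -> x'.1 != y'.1 ->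
  exists2 g, g \in Bn n & g x = x' /\ g y = y'.
Proof.
move=> hxy hxy'.
have [g1 hg1 [g1x _]] := trans1 x x'.
have [g2 hg2 [g2z g2w]] := trans1 (g1 y) y'.
exists (g1 * g2); first exact: BnM.
rewrite !permM g1x g2z; split => //.
apply: g2w; last by [].
by rewrite -g1x Bn_fst // eq_sym.
Qed.

Local Close Scope group_scope.

Lemma sum_eq1 (T : finType) (u : T) : \sum_(y : T) (y == u : nat) = 1.
Proof. by rewrite (bigD1 u) //= eqxx big1 // => y /negbTE ->. Qed.

Lemma sum_by n (T : finType) (h : {perm ('I_n * bool)} -> T) (F : T -> nat) :
  \sum_(p in Bn n) F (h p) = \sum_(t : T) F t * \sum_(p in Bn n) (h p == t : nat).
Proof.
transitivity (\sum_(p in Bn n) \sum_(t : T) (h p == t : nat) * F t).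
  apply: eq_bigr => p _; rewrite (bigD1 (h p)) //= eqxx mul1n big1 ?addn0 //.
  by move=> t; rewrite eq_sym => /negbTE ->.
rewrite exchange_big; apply: eq_bigr => t _.
by rewrite mulnC big_distrl.
Qed.

Lemma fib1 n (a : 'I_n) x x' :
  \sum_(p in Bn n) (p (a, false) == x : nat) = \sum_(p in Bn n) (p (a, false) == x' : nat).
Proof.
have [g hg [gx _]] := trans1 x x'.
rewrite -(sum_Bn_Mr addn (fun p => nat_of_bool (p (a, false) == x')) hg).
by apply: eq_bigr => p _; rewrite permM -gx (inj_eq perm_inj).
Qed.

Lemma fib2 n (a b : 'I_n) x y x' y' : x.1 != y.1 -> x'.1 != y'.1 ->
  \sum_(p in Bn n) ((p (a, false), p (b, false)) == (x, y) : nat) =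
  \sum_(p in Bn n) ((p (a, false), p (b, false)) == (x', y') : nat).
Proof.
move=> h h'; have [g hg [gx gy]] := trans2 h h'.
rewrite -(sum_Bn_Mr addn (fun p => nat_of_bool ((p (a, false), p (b, false)) == (x', y'))) hg).
by apply: eq_bigr => p _; rewrite !permM -gx -gy !xpair_eqE !(inj_eq perm_inj).
Qed.

Lemma card_E n : \sum_(t : 'I_n * bool) 1 = (n * 2)%N.
Proof. by rewrite sum1_card card_prod card_ord card_bool. Qed.

Lemma count1 n (a : 'I_n) (F : 'I_n * bool -> nat) :
  ((\sum_(p in Bn n) F (p (a, false))) * (n * 2) = #|Bn n| * \sum_t F t)%N.
Proof.
have eK t : \sum_(p in Bn n) (p (a, false) == t : nat) = \sum_(p in Bn n) (p (a, false) == (a, false) : nat).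
  exact: fib1.
set K := \sum_(p in Bn n) (p (a, false) == (a, false) : nat) in eK.
have e1 : \sum_(p in Bn n) F (p (a, false)) = (\sum_t F t) * K.
  by rewrite (sum_by (fun p => p (a, false))) big_distrl; apply: eq_bigr => t _; rewrite eK.
have e2 : #|Bn n| = (n * 2 * K)%N.
  rewrite -sum1_card (sum_by (fun p => p (a, false)) (fun _ => 1%N)) -card_E big_distrl.
  by apply: eq_bigr => t _; rewrite eK.
rewrite e1 e2; ring.
Qed.

Lemma count2 n (a b : 'I_n) (F : 'I_n * bool -> 'I_n * bool -> nat) : a != b ->
  ((\sum_(p in Bn n) F (p (a, false)) (p (b, false))) *
     (\sum_(t : ('I_n * bool) * ('I_n * bool)) (t.1.1 != t.2.1 : nat))
   = #|Bn n| * \sum_(t : ('I_n * bool) * ('I_n * bool)) (t.1.1 != t.2.1) * F t.1 t.2)%N.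
Proof.
move=> ab.
set h := fun p : {perm ('I_n * bool)} => (p (a, false), p (b, false)).
set K := \sum_(p in Bn n) (h p == ((a, false), (b, false)) : nat).
have eK t : \sum_(p in Bn n) (h p == t : nat) = ((t.1.1 != t.2.1) * K)%N.
  case: t => x y /=; case: (boolP (x.1 != y.1)) => hxy.
    by rewrite mul1n /K /h (@fib2 n a b x y (a, false) (b, false) hxy).
  rewrite mul0n big1 // => p hp; rewrite /h xpair_eqE.
  apply/eqP; rewrite eqb0; apply/negP => /andP [/eqP ex /eqP ey]; move: hxy; rewrite -ex -ey Bn_fst //=.
  by rewrite ab.
have e1 : \sum_(p in Bn n) F (p (a, false)) (p (b, false)) =
          ((\sum_t (t.1.1 != t.2.1) * F t.1 t.2) * K)%N.
  rewrite (sum_by h (fun t => F t.1 t.2)) big_distrl; apply: eq_bigr => t _; rewrite eK /=.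
  by rewrite mulnA (mulnC (F _ _)).
have e2 : #|Bn n| = ((\sum_(t : ('I_n * bool) * ('I_n * bool)) (t.1.1 != t.2.1 : nat)) * K)%N.
  rewrite -sum1_card (sum_by h (fun _ => 1%N)) big_distrl.
  by apply: eq_bigr => t _; rewrite eK mul1n.
rewrite e1 e2; ring.
Qed.

Lemma gp_pt (T : eqType) (P Q c d : T) (s t : bool) : P != Q ->
  ((s == t) && ((c == P) && (d == Q) || (c == Q) && (d == P)) : nat) =
  ((c == P) * ((d, t) == (Q, s)) + (c == Q) * ((d, t) == (P, s)))%N.
Proof.
move=> PQ; rewrite !xpair_eqE (eq_sym t s).
have QP : (Q == P) = false by apply/negbTE; rewrite eq_sym.
case: (eqVneq c P) => [cP|cP]; case: (eqVneq c Q) => [cQ|cQ] /=.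
- by move: PQ; rewrite -cP -cQ eqxx.
- by case: (s == t); case: (d == Q); case: (d == P).
- by case: (s == t); case: (d == Q); case: (d == P).
- by case: (s == t); case: (d == Q); case: (d == P).
Qed.

Lemma cnt_fst n (c : 'I_n) : \sum_(y : 'I_n * bool) (y.1 == c : nat) = 2.
Proof.
rewrite (bigD1 (c, false)) //= (bigD1 (c, true)) /=; last by rewrite xpair_eqE /= andbF.
rewrite !(eqxx c) big1 // => -[d s] /andP [h1 h2] /=.
case: (eqVneq d c) => [E|//]; move: h1 h2; rewrite E; by case: s => /eqP h1 /eqP h2; [case: h2 | case: h1].
Qed.

Lemma cnt_neq n (c : 'I_n) : \sum_(y : 'I_n * bool) (c != y.1 : nat) = (n * 2 - 2)%N.
Proof.
have := cnt_fst c; rewrite -card_E.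
have : (\sum_(y : 'I_n * bool) (c != y.1 : nat) + \sum_(y : 'I_n * bool) (y.1 == c : nat) = \sum_(y : 'I_n * bool) 1)%N.
  by rewrite -big_split; apply: eq_bigr => y _; rewrite eq_sym; case: (y.1 == c).
lia.
Qed.

Lemma C2E n : \sum_(t : ('I_n * bool) * ('I_n * bool)) (t.1.1 != t.2.1 : nat) = (n * 2 * (n * 2 - 2))%N.
Proof.
rewrite -(pair_big predT predT (fun x y => (x.1 != y.1 : nat))) /=.
by rewrite (eq_bigr (fun _ => n * 2 - 2)%N) => [|x _]; [rewrite sum_nat_const card_prod card_ord card_bool | apply: cnt_neq].
Qed.

Lemma cnt_j0 n (z : 'I_n) : val z = 0%N -> \sum_(j < n) (val j == 0%N : nat) = 1.
Proof.
move=> z0; rewrite -(sum_eq1 z); apply: eq_bigr => j _.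
by rewrite -val_eqE z0.
Qed.

Lemma cnt_jn0 n (z : 'I_n) : val z = 0%N -> \sum_(j < n) (val j != 0%N : nat) = (n - 1)%N.
Proof.
move=> z0; have := cnt_j0 z0.
have : (\sum_(j < n) (val j != 0%N : nat) + \sum_(j < n) (val j == 0%N : nat) = \sum_(j < n) 1)%N.
  by rewrite -big_split; apply: eq_bigr => y _; case: (val y == 0%N).
rewrite sum1_card card_ord; lia.
Qed.

Lemma gp_count n (i j : 'I_n) : val i != 0%N ->
  \sum_(t : ('I_n * bool) * ('I_n * bool)) (t.1.1 != t.2.1) * goodpair i j t.1 t.2 = (4 * (val j != 0%N))%N.
Proof.
move=> i0; rewrite /goodpair (negbTE i0).
case: (eqVneq (nat_of_ord j) 0%N) => j0.
  by rewrite big1 // => t _ /=; rewrite muln0.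
have pj := prev_neq j0.
rewrite (eq_bigr (fun t => nat_of_bool ((t.1.2 == t.2.2) && ((t.1.1 == prev j) && (t.2.1 == j) || (t.1.1 == j) && (t.2.1 == prev j))))); last first.
  move=> [[c s] [d t]] _ /=.
  case: (eqVneq c d) => [->|cd]; last by rewrite mul1n.
  rewrite mul0n; case: (eqVneq d j) => [->|dj]; first by rewrite (eq_sym j) pj /= ?andbF.
  by rewrite /= ?andbF.
rewrite -(pair_big predT predT (fun x y => nat_of_bool ((x.2 == y.2) && ((x.1 == prev j) && (y.1 == j) || (x.1 == j) && (y.1 == prev j))))) /=.
rewrite (eq_bigr (fun x : 'I_n * bool => (x.1 == prev j) + (x.1 == j))%N); last first.
  move=> [c s] _ /=.
  rewrite (eq_bigr (fun y : 'I_n * bool => (c == prev j) * (y == (j, s)) + (c == j) * (y == (prev j, s))))%N; last first.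
    by move=> [d t] _; rewrite gp_pt // pj.
  by rewrite big_split /= -!big_distrr /= !sum_eq1 !muln1.
by rewrite big_split /= !cnt_fst.
Qed.

Lemma sum_valcond n (i : 'I_n) :
  ((\sum_(j < n) \sum_(p in Bn n) valcond i j p) * n = #|Bn n|)%N.
Proof.
rewrite exchange_big /=.
case h0: (val i == 0%N).
  pose F := fun y : 'I_n * bool => \sum_(j < n) ((val j == 0%N) && (y.1 == j) : nat).
  have eF : \sum_(t : 'I_n * bool) F t = 2.
    rewrite /F exchange_big /=.
    transitivity (\sum_(j < n) ((val j == 0%N) * 2)%N).
      apply: eq_bigr => j _; case: (val j == 0%N); rewrite ?mul0n ?mul1n; last by rewrite big1.
      exact: cnt_fst.
    by rewrite -big_distrl /= (cnt_j0 (z := i)) //; apply/eqP.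
  have eS : \sum_(p in Bn n) \sum_(j < n) valcond i j p = \sum_(p in Bn n) F (p (i, false)).
    by apply: eq_bigr => p _; apply: eq_bigr => j _; rewrite /valcond /goodpair h0.
  have := count1 i F; rewrite eF -eS => H.
  apply/eqP; rewrite -(eqn_pmul2r (_ : 0 < 2)%N) // -mulnA H.
  by rewrite mulnC.
have hpi : prev i != i by rewrite prev_neq ?h0.
pose F := fun x y => \sum_(j < n) goodpair i j x y.
have hn : (1 < n)%N by move: h0; case: i {hpi F} => [[|k] hk] //= _; lia.
have z0 : (0 < n)%N by lia.
have eF : \sum_(t : ('I_n * bool) * ('I_n * bool)) (t.1.1 != t.2.1) * F t.1 t.2 = (4 * (n - 1))%N.
  rewrite /F.
  transitivity (\sum_(t : ('I_n * bool) * ('I_n * bool)) \sum_(j < n) (t.1.1 != t.2.1) * goodpair i j t.1 t.2)%N.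
    by apply: eq_bigr => t _; rewrite big_distrr.
  rewrite exchange_big /=.
  transitivity (\sum_(j < n) (4 * (val j != 0%N))%N).
    by apply: eq_bigr => j _; rewrite gp_count ?h0.
  by rewrite -big_distrr /= (cnt_jn0 (z := Ordinal z0)).
have eS : \sum_(p in Bn n) \sum_(j < n) valcond i j p = \sum_(p in Bn n) F (p (prev i, false)) (p (i, false)).
  by [].
have := count2 F hpi; rewrite C2E eF -eS.
set S := \sum_(p in Bn n) _.
move=> H; apply/eqP; rewrite -(eqn_pmul2r (_ : 0 < 4 * (n - 1))%N); last by lia.
apply/eqP; rewrite -H.
have -> : (n * 2 - 2 = 2 * (n - 1))%N by lia.
ring.
Qed.


Local Close Scope group_scope.
Local Close Scope ring_scope.

Lemma sum_des n : ((\sum_(p in Bn n) des p) * 2 = n * #|Bn n|)%N.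
Proof.
rewrite (eq_bigr _ (fun p _ => desE p)) exchange_big /= big_distrl /=.
rewrite (eq_bigr _ (fun i _ => sum_D i)) sum_nat_const card_ord.
by [].
Qed.

Lemma sum_ides n : \sum_(p in Bn n) ides p = \sum_(p in Bn n) des p.
Proof. exact: (sum_Bn_V addn (@des n)). Qed.

Lemma sum_V n : (0 < n)%N ->
  \sum_(i < n) \sum_(j < n) \sum_(p in Bn n) valcond i j p = #|Bn n|.
Proof.
move=> hn; apply/eqP; rewrite -(eqn_pmul2r hn) big_distrl /=.
rewrite (eq_bigr _ (fun i _ => sum_valcond i)) sum_nat_const card_ord.
by rewrite mulnC.
Qed.

Lemma sum_de n : (0 < n)%N ->
  (4 * \sum_(p in Bn n) (des p * ides p) = (n * n + 1) * #|Bn n|)%N.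
Proof.
move=> hn.
have e0 p : (des p * ides p = \sum_(i < n) \sum_(j < n) f2 i j p)%N.
  rewrite /ides !desE big_distrl /=; apply: eq_bigr => i _; rewrite big_distrr /=.
  by apply: eq_bigr => j _; rewrite /f2 mulnb.
have e1 : \sum_(p in Bn n) (des p * ides p) =
          \sum_(i < n) \sum_(j < n) \sum_(p in Bn n) f2 i j p.
  rewrite (eq_bigr _ (fun p _ => e0 p)) exchange_big /=.
  by apply: eq_bigr => i _; rewrite exchange_big.
rewrite e1 big_distrr /=.
rewrite (eq_bigr (fun i : 'I_n => \sum_(j < n) (#|Bn n| + \sum_(p in Bn n) valcond i j p))%N); last first.
  by move=> i _; rewrite big_distrr /=; apply: eq_bigr => j _; rewrite sum_f2.
rewrite (eq_bigr (fun i : 'I_n => n * #|Bn n| + \sum_(j < n) \sum_(p in Bn n) valcond i j p))%N; last first.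
  by move=> i _; rewrite big_split /= sum_nat_const card_ord.
rewrite big_split /= sum_V // sum_nat_const card_ord; ring.
Qed.

Local Open Scope ring_scope.

Lemma sum_var n (X : {perm ('I_n * bool)} -> nat) (mu : rat) :
  \sum_(p in Bn n) ((X p)%:R - mu) ^+ 2 =
  \sum_(p in Bn n) ((X p)%:R ^+ 2) + (- 2 * mu) * \sum_(p in Bn n) (X p)%:R + mu ^+ 2 * #|Bn n|%:R.
Proof.
rewrite (eq_bigr (fun p => (X p)%:R ^+ 2 + (- 2 * mu) * (X p)%:R + mu ^+ 2)); last by move=> p _; ring.
by rewrite !big_split /= -mulr_sumr sumr_const mulr_natr.
Qed.

Lemma sum_var2 n (X Y : {perm ('I_n * bool)} -> nat) (mu : rat) :
  \sum_(p in Bn n) ((X p + Y p)%N%:R - mu) ^+ 2 =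
  \sum_(p in Bn n) ((X p)%:R ^+ 2) + \sum_(p in Bn n) ((Y p)%:R ^+ 2)
  + 2 * \sum_(p in Bn n) (X p * Y p)%N%:R
  + (- 2 * mu) * \sum_(p in Bn n) (X p)%:R + (- 2 * mu) * \sum_(p in Bn n) (Y p)%:R
  + mu ^+ 2 * #|Bn n|%:R.
Proof.
rewrite (eq_bigr (fun p => (X p)%:R ^+ 2 + (Y p)%:R ^+ 2 + 2 * (X p * Y p)%N%:R
   + (- 2 * mu) * (X p)%:R + (- 2 * mu) * (Y p)%:R + mu ^+ 2)); last first.
  by move=> p _; rewrite natrD natrM; ring.
by rewrite !big_split /= -!mulr_sumr sumr_const mulr_natr mulrnAr expr2.
Qed.

Unset Implicit Arguments.
Theorem proposition5p7 (n : nat) (hn : (1 <= n)%N) :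
  expB (fun p : {perm ('I_n * bool)} => (des p + ides p)%N) = n%:R /\
  varB (fun p : {perm ('I_n * bool)} => (des p + ides p)%N)
    = 2 * varB (fun p : {perm ('I_n * bool)} => des p) + 1 / 2.
Proof.
have N0 : #|Bn n|%:R != 0 :> rat.
  by rewrite pnatr_eq0 -lt0n; apply/card_gt0P; exists 1%g; apply: Bn1.
have hSd : (\sum_(p in Bn n) (des p)%:R : rat) = n%:R * #|Bn n|%:R / 2.
  apply: (@mulIf _ 2) => //; rewrite mulfVK // -natr_sum.
  have := congr1 (fun k : nat => k%:R : rat) (sum_des n); rewrite /= !natrM => ->.
  by [].
have hSe : (\sum_(p in Bn n) (ides p)%:R : rat) = \sum_(p in Bn n) (des p)%:R.
  by rewrite -!natr_sum sum_ides.
have hSee : (\sum_(p in Bn n) (ides p)%:R ^+ 2 : rat) = \sum_(p in Bn n) (des p)%:R ^+ 2.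
  exact: (sum_Bn_V +%R (fun p => ((des p)%:R : rat) ^+ 2)).
have hSde : (\sum_(p in Bn n) (des p * ides p)%N%:R : rat) = (n%:R ^+ 2 + 1) * #|Bn n|%:R / 4.
  apply: (@mulIf _ 4) => //; rewrite mulfVK // -natr_sum mulrC -natrM sum_de //.
  by rewrite natrM natrD natrM expr2.
have E1 : expB (fun p : {perm ('I_n * bool)} => (des p + ides p)%N) = n%:R.
  rewrite /expB (eq_bigr (fun p => (des p)%:R + (ides p)%:R)); last by move=> p _; rewrite natrD.
  rewrite big_split /= hSe hSd; field => //.
have E2 : expB (fun p : {perm ('I_n * bool)} => des p) = n%:R / 2.
  rewrite /expB hSd; field => //.
split => //.
rewrite /varB E1 E2 sum_var2 sum_var hSe hSee hSde hSd.
field => //.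
Qed.
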